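(* Let $b\ge2$ and let $S$ be a nonempty subset of $\mathbb{Z}$. Then all $b$-orderings $\mathbf{a}$ of $S$ give the same values $\alpha_k(S,b,\mathbf{a})$ for each $k$, and, writing $\alpha_k(S,b)$ for this common value, $$\alpha_k(S,b)=\alpha_k(\varphi_b(S))\quad\text{for all } k\ge1,$$ where $\alpha_k(\varphi_b(S))$ is the $t$-exponent sequence of the set $\varphi_b(S)\subseteq\mathbb{Q}[[t]]$.
   Context: For $b\ge2$ and $a\in\mathbb{Z}$, $\operatorname{ord}_b(a)$ is the largest $k\in\mathbb{N}$ with $b^k\mid a$ ($+\infty$ for $a=0$). A $b$-ordering of $S$ is a sequence $\mathbf{a}=(a_i)_{i\ge0}$ in $S$ such that for each $i\ge1$, $a_i$ attains $\min_{a'\in S}\sum_{j=0}^{i-1}\operatorname{ord}_b(a'-a_j)$; $\alpha_k(S,b,\mathbf{a}):=\sum_{j=0}^{k-1}\operatorname{ord}_b(a_k-a_j)$. The map $\varphi_b:\mathbb{Z}\to\mathbb{Q}[[t]]$ is $\varphi_b(a)=\sum_{k\ge0}d_k t^k$ where $d_k=\lfloor a/b^k\rfloor-b\lfloor a/b^{k+1}\rfloor$ are the base-$b$ digits of $a$. For $f\in\mathbb{Q}[[t]]$, $\operatorname{ord}_t(f)$ is the largest $\alpha$ with $t^\alpha\mid f$ ($+\infty$ for $f=0$). For nonempty $U\subseteq\mathbb{Q}[[t]]$, a $t$-ordering of $U$ is a sequence $(f_i)_{i\ge0}$ in $U$ with each $f_k$ ($k\ge1$) minimizing $\sum_{j=0}^{k-1}\operatorname{ord}_t(f_k-f_j)$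 over $U$; the $t$-exponent sequence $\alpha_k(U):=\sum_{j=0}^{k-1}\operatorname{ord}_t(f_k-f_j)$ for any $t$-ordering (independent of the choice). *)

(* Defs.v *)
From mathcomp Require Import all_boot all_order all_algebra.
From Stdlib Require Import ClassicalEpsilon.
Set Implicit Arguments. Unset Strict Implicit. Unset Printing Implicit Defensive.
Import Order.TTheory GRing.Theory Num.Theory.

(* Extended naturals N ∪ {+oo}: [Some n] is n, [None] is +oo. *)
Definition enat := option nat.
Definition eadd (x y : enat) : enat :=
  match x, y with Some m, Some n => Some (m + n)%N | _, _ => None end.
Definition ele (x y : enat) : bool :=
  match x, y with
  | _, None => true
  | None, Some _ => false
  | Some m, Some n => (m <= n)%N
  end.

(* ord_b(a): largest k with b^k | a, +oo for a = 0.  For a <> 0 such k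
   satisfies k <= |a| (as b >= 2), so a bounded max suffices. *)
Definition ordb (b : nat) (a : int) : enat :=
  if a == 0%R then None
  else Some (\max_(k < `|a|%N.+1 | (b ^ k)%N %| `|a|%N) k)%N.

Definition bsum (b : nat) (a : nat -> int) (i : nat) (x : int) : enat :=
  \big[eadd/Some 0%N]_(j < i) ordb b (x - a j)%R.

Definition b_ordering (b : nat) (S : int -> Prop) (a : nat -> int) : Prop :=
  (forall i, S (a i)) /\
  (forall i, (1 <= i)%N -> forall x, S x -> ele (bsum b a i (a i)) (bsum b a i x)).

Definition alpha_b (b : nat) (a : nat -> int) (k : nat) : enat := bsum b a k (a k).

Definition pseries := nat -> rat.

Definition psub (f g : pseries) : pseries := fun n => (f n - g n)%R.

Definition ordt (f : pseries) : enat :=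
  match excluded_middle_informative (exists n, f n != 0%R) with
  | left H => Some (ex_minn H)
  | right _ => None
  end.

(* base-b digits: d_k = floor(a/b^k) - b floor(a/b^(k+1)) (floor division) *)
Definition phi (b : nat) (a : int) : pseries :=
  fun k => ((a %/ (b ^ k)%N%:Z)%Z - b%:Z * (a %/ (b ^ k.+1)%N%:Z)%Z)%:~R%R.

Definition phi_image (b : nat) (S : int -> Prop) : pseries -> Prop :=
  fun f => exists s, S s /\ f = phi b s.

Definition tsum (f : nat -> pseries) (i : nat) (g : pseries) : enat :=
  \big[eadd/Some 0%N]_(j < i) ordt (psub g (f j)).

Definition t_ordering (U : pseries -> Prop) (f : nat -> pseries) : Prop :=
  (forall i, U (f i)) /\
  (forall i, (1 <= i)%N -> forall g, U g -> ele (tsum f i (f i)) (tsum f i g)).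

Definition alpha_t (f : nat -> pseries) (k : nat) : enat := tsum f k (f k).

(* Main.v *)
Require Import Defs.
From HB Require Import structures.
From mathcomp Require Import all_boot all_order all_algebra.
From mathcomp Require Import zify ring.
From Stdlib Require Import Classical ClassicalEpsilon.
Set Implicit Arguments. Unset Strict Implicit. Unset Printing Implicit Defensive.
Import Order.TTheory GRing.Theory Num.Theory.

Lemma eaddA : associative eadd. Proof. by case=> [x|] [y|] [z|] //=; rewrite addnA. Qed.
Lemma eaddC : commutative eadd. Proof. by case=> [x|] [y|] //=; rewrite addnC. Qed.
Lemma eadd0 : left_id (Some 0%N) eadd. Proof. by case. Qed.
HB.instance Definition _ := Monoid.isComLaw.Build enat (Some 0%N) eadd eaddA eaddC eadd0.

Lemma ele_refl (x : enat) : ele x x. Proof. case: x => [n|] //=. Qed.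
Lemma ele_trans (x y z : enat) : ele x y -> ele y z -> ele x z.
Proof. case: x=> [x|]; case: y=> [y|]; case: z=> [z|] //= ; exact: leq_trans. Qed.
Lemma ele_anti (x y : enat) : ele x y -> ele y x -> x = y.
Proof. case: x=> [x|]; case: y=> [y|] //= h1 h2; congr Some; apply/eqP; by rewrite eqn_leq h1 h2. Qed.
Lemma ele_add (x y x' y' : enat) : ele x y -> ele x' y' -> ele (eadd x x') (eadd y y').
Proof. case: x=> [x|]; case: y=> [y|]; case: x'=> [x'|]; case: y'=> [y'|] //=; exact: leq_add. Qed.
Lemma ele_None (x : enat) : ele x None. Proof. by case: x. Qed.
Lemma ele_addr (x y : enat) : ele x (eadd x y).
Proof. case: x=> [x|]; case: y=> [y|] //=; exact: leq_addr. Qed.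
Lemma eadd_None_l (x : enat) : eadd None x = None. Proof. by []. Qed.
Lemma eadd_None_r (x : enat) : eadd x None = None. Proof. by case: x. Qed.

Lemma big_Some (T : eqType) (s : seq T) (F : T -> enat) (g : T -> nat) :
  (forall z, z \in s -> F z = Some (g z)) ->
  \big[eadd/Some 0%N]_(z <- s) F z = Some (\sum_(z <- s) g z)%N.
Proof.
elim: s => [|x s IH] H; first by rewrite !big_nil.
rewrite !big_cons H ?mem_head //.
by rewrite IH // => z Hz; apply: H; rewrite in_cons Hz orbT.
Qed.

Lemma big_None_ex n (F : nat -> enat) :
  \big[eadd/Some 0%N]_(i < n) F i = None -> exists2 i, (i < n)%N & F i = None.
Proof.
elim: n => [|n IH]; first by rewrite big_ord0.
rewrite big_ord_recr /=.
case E: (\big[eadd/Some 0%N]_(i < n) F i) => [v|].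
  case EF: (F n) => [w|] //= _; by exists n.
by case: (IH E) => i Hi Fi _; exists i => //; apply: ltnW.
Qed.
Lemma count_split (T : eqType) (f : int -> T) (P : pred int) k y0 (s : seq int) :
  (forall x z, f x = f z -> P x = P z) -> f y0 = k -> P y0 ->
  count P s = (count (fun z => f z == k) s + count P (filter (fun z => f z != k) s))%N.
Proof.
move=> hf hk Py0; elim: s => //= z s ->.
case: (eqVneq (f z) k) => e /=.
  by rewrite (hf z y0 (etrans e (esym hk))) Py0 /= add1n addSn.
by rewrite addnCA.
Qed.

Lemma pigeon (T : eqType) (f : int -> T) (P : pred int) (Y A : seq int) :
  (forall x z, f x = f z -> P x = P z) -> (count P A < count P Y)%N ->
  exists2 y, y \in Y & P y && (count (fun z => f z == f y) A < count (fun z => f z == f y) Y)%N.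
Proof.
move=> hf.
have [n hn] : exists n, (size Y < n)%N by exists (size Y).+1.
elim: n Y A hn => // n IH Y A hY hc.
have : has P Y by rewrite has_count; apply: leq_ltn_trans hc.
case/hasP => y0 y0Y Py0.
set k := f y0.
case: (ltnP (count (fun z => f z == k) A) (count (fun z => f z == k) Y)) => hk.
  by exists y0 => //; rewrite Py0.
set Y' := filter (fun z => f z != k) Y.
set A' := filter (fun z => f z != k) A.
have eY := count_split Y hf (erefl k) Py0.
have eA := count_split A hf (erefl k) Py0.
have hY' : (size Y' < n)%N.
  rewrite size_filter.
  have h2 : (count (fun z => f z == k) Y + count (fun z => f z != k) Y = size Y)%N.
    by rewrite -(count_predC (fun z => f z == k)); congr addn; apply: eq_count.
  have h1 : (0 < count (fun z => f z == k) Y)%N.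
    by rewrite -has_count; apply/hasP; exists y0.
  lia.
have hc' : (count P A' < count P Y')%N by rewrite -/Y' -/A' in eY eA; lia.
have [y yY' /andP[Py hy]] := IH Y' A' hY' hc'.
move: yY'; rewrite mem_filter => /andP[fyk yY].
exists y => //; rewrite Py /=.
have ec : forall s, count (fun z => f z == f y) (filter (fun z => f z != k) s) = count (fun z => f z == f y) s.
  move=> s; rewrite count_filter; apply: eq_count => z /=.
  by case: (eqVneq (f z) (f y)) => // ->; rewrite fyk.
by move: hy; rewrite /Y' /A' !ec.
Qed.

Local Open Scope ring_scope.

Definition km (b m : nat) (z : int) : int := (z %% (b ^ m)%N%:Z)%Z.

Lemma ordb0 b : ordb b 0 = None. Proof. by rewrite /ordb eqxx. Qed.
Lemma ordbN b a : ordb b (- a) = ordb b a.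
Proof. by rewrite /ordb oppr_eq0 abszN. Qed.

Lemma ordb_spec (b : nat) (a : int) : (1 < b)%N -> a != 0%R ->
  exists v, ordb b a = Some v /\ forall k, ((b ^ k)%N%:Z %| a)%Z = (k <= v)%N.
Proof.
move=> hb ha; rewrite /ordb (negbTE ha).
set v := (\max_(k < _ | _) _)%N.
have hv : ((b ^ v) %| `|a|)%N.
  rewrite /v; elim/big_ind: _ => //.
  by move=> x y hx hy; rewrite /maxn; case: ifP.
exists v; split => // k; rewrite dvdzE /=; apply/idP/idP => hk.
  have ak : (0 < `|a|)%N by rewrite absz_gt0.
  have kl : (k < `|a|.+1)%N.
    apply: (leq_trans (ltn_expl k hb)); apply: leq_trans (leqnSn _); exact: dvdn_leq.
  exact: (leq_bigmax_cond (Ordinal kl) hk).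
exact: dvdn_trans (dvdn_exp2l b hk) hv.
Qed.

Lemma kmK b m M x : (m <= M)%N -> km b m (km b M x) = km b m x.
Proof.
move=> hm; rewrite /km.
have : ((b ^ m)%N%:Z %| (b ^ M)%N%:Z)%Z by rewrite dvdzE /=; exact: dvdn_exp2l.
case/dvdzP => q ->.
rewrite /modz.
set D := (_ %/ (q * _))%Z.
have -> : x - D * (q * (b ^ m)%N%:Z) = (- (D * q)) * (b ^ m)%N%:Z + x.
  by rewrite mulNr mulrA addrC.
by rewrite -/(modz _ _) modzMDl.
Qed.

Lemma dvmE b m x y : (km b m x == km b m y) = ((b ^ m)%N%:Z %| x - y)%Z.
Proof. exact: eqz_mod_dvd. Qed.

Definition dig (b k : nat) (x : int) : int :=
  ((x %/ (b ^ k)%N%:Z)%Z - b%:Z * (x %/ (b ^ k.+1)%N%:Z)%Z)%R.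

Lemma digE b k x : dig b k x = ((x %/ (b ^ k)%N%:Z)%Z %% b%:Z)%Z.
Proof.
rewrite /dig /modz expnSr PoszM divzMA_ge0 //; by rewrite mulrC.
Qed.

Lemma dig_step b m x y : (0 < b)%N -> ((b ^ m)%N%:Z %| x - y)%Z ->
  ((b ^ m.+1)%N%:Z %| x - y)%Z = (dig b m x == dig b m y).
Proof.
move=> hb hd.
have Bn0 : (b ^ m)%N%:Z != 0 by rewrite eqz_nat -lt0n expn_gt0 hb.
have hr : km b m x = km b m y by apply/eqP; rewrite dvmE.
have -> : x - y = ((x %/ (b ^ m)%N%:Z)%Z - (y %/ (b ^ m)%N%:Z)%Z) * (b ^ m)%N%:Z.
  rewrite {1}(divz_eq x ((b ^ m)%N%:Z)) {1}(divz_eq y ((b ^ m)%N%:Z)).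
  rewrite -/(km b m x) -/(km b m y) hr; ring.
by rewrite expnS PoszM dvdz_mul2r // -eqz_mod_dvd !digE.
Qed.

Lemma coefE b x y k : psub (phi b x) (phi b y) k = ((dig b k x)%:~R - (dig b k y)%:~R :> rat).
Proof. by []. Qed.

Lemma coef_neq0 b x y k : (psub (phi b x) (phi b y) k != 0) = (dig b k x != dig b k y).
Proof. by rewrite coefE subr_eq0 eqr_int. Qed.

Lemma ordt_phi b x y : (1 < b)%N -> ordt (psub (phi b x) (phi b y)) = ordb b (x - y).
Proof.
move=> hb; have hb0 : (0 < b)%N by apply: ltnW.
case: (eqVneq x y) => [->|hxy].
  rewrite subrr ordb0 /ordt; case: excluded_middle_informative => // H.
  by exfalso; case: H => n; rewrite coef_neq0 eqxx.
have hxy0 : x - y != 0 by rewrite subr_eq0.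
have [v [Hv Hk]] := ordb_spec hb hxy0.
have dv : dig b v x != dig b v y.
  by rewrite -dig_step // ?Hk /= ?ltnn ?leqnn.
have dk : forall k, (k < v)%N -> dig b k x = dig b k y.
  by move=> k hk; apply/eqP; rewrite -dig_step // ?Hk // ltnW.
rewrite Hv /ordt; case: excluded_middle_informative => [H|H].
  congr Some; case: ex_minnP => n Hn Hmin.
  apply/eqP; rewrite eqn_leq; apply/andP; split.
    by apply: Hmin; rewrite coef_neq0.
  rewrite leqNgt; apply/negP => hn; move: Hn; by rewrite coef_neq0 (dk n hn) eqxx.
by exfalso; apply: H; exists v; rewrite coef_neq0.
Qed.


Lemma levels b M (Y A : seq int) : (size A < size Y)%N ->
  exists2 y, y \in Y & forall m, (m <= M)%N ->
   (count (fun z => km b m z == km b m y) A < count (fun z => km b m z == km b m y) Y)%N.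
Proof.
move=> hs; elim: M => [|M [y yY IH]].
  case: Y hs => [|y Y] // hs; exists y; first exact: mem_head.
  move=> m; rewrite leqn0 => /eqP ->.
  have e : forall s : seq int, count (fun z => km b 0 z == km b 0 y) s = size s.
    by move=> s; rewrite -count_predT; apply: eq_count => z; rewrite /km expn0 !modz1 eqxx.
  by rewrite !e.
have hf : forall x z, km b M.+1 x = km b M.+1 z ->
   (km b M x == km b M y) = (km b M z == km b M y).
  by move=> x z e; rewrite -(@kmK b M M.+1 x (leqnSn M)) e kmK.
have [y' y'Y /andP[/eqP Py' hy']] := pigeon hf (IH M (leqnn M)).
exists y' => // m; rewrite leq_eqVlt => /orP[/eqP ->|hm]; first exact: hy'.
have -> : km b m y' = km b m y by rewrite -(@kmK b m M y' hm) Py' kmK.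
exact: IH.
Qed.

Definition cost b (x : int) (s : seq int) : enat := \big[eadd/Some 0%N]_(z <- s) ordb b (x - z).

Lemma sum_lt M v : (\sum_(m < M) ((m < v)%N : nat) = minn v M)%N.
Proof.
elim: M => [|M IH]; first by rewrite big_ord0 minn0.
rewrite big_ord_recr /= IH; case: (ltnP M v) => h /=; lia.
Qed.

Lemma count_sum (T : Type) (p : pred T) (s : seq T) : (\sum_(z <- s) (p z : nat))%N = count p s.
Proof. by elim: s => [|z s IH]; rewrite ?big_nil ?big_cons ?IH. Qed.

Lemma ordb_count b y z M : (1 < b)%N -> y != z -> (`|y - z| <= M)%N ->
  ordb b (y - z) = Some (\sum_(m < M) ((km b m.+1 z == km b m.+1 y) : nat))%N.
Proof.
move=> hb hyz hM.
have hyz0 : y - z != 0 by rewrite subr_eq0.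
have [v [Hv Hk]] := ordb_spec hb hyz0.
rewrite Hv; congr Some.
have hv : (v <= M)%N.
  have := Hk v; rewrite leqnn dvdzE /= => h.
  have h' := dvdn_leq _ h; rewrite absz_gt0 hyz0 in h'.
  have := ltn_expl v hb; have := h' isT; lia.
rewrite -(minn_idPl hv) -sum_lt; apply: eq_bigr => m _.
by rewrite dvmE -opprB dvdzE abszN -dvdzE Hk.
Qed.

Lemma KL b (Y A : seq int) : (1 < b)%N -> uniq Y -> (size A < size Y)%N ->
  exists2 y, y \in Y & ele (cost b y A) (cost b y (rem y Y)).
Proof.
move=> hb hu hs.
set L := A ++ Y.
set M := (\sum_(x <- L) \sum_(z <- L) `|x - z|)%N.
have hM : forall x z, x \in L -> z \in L -> (`|x - z| <= M)%N.
  move=> x z hx hz; rewrite /M (big_rem x hx) /=; apply: leq_trans (leq_addr _ _).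
  rewrite (big_rem z hz) /=; exact: leq_addr.
have [y yY hy] := levels b M hs.
exists y => //.
have yL : y \in L by rewrite mem_cat yY orbT.
have bM : (M < b ^ M)%N := ltn_expl M hb.
have nd : forall z, z \in L -> z != y -> km b M z != km b M y.
  move=> z zL zy; rewrite dvmE dvdzE /=; apply/negP => h.
  have h' := dvdn_leq _ h; rewrite absz_gt0 subr_eq0 zy in h'.
  have := hM z y zL yL; have := h' isT; lia.
have remP : forall z, z \in rem y Y -> (z \in Y) && (z != y).
  by move=> z; rewrite (mem_rem_uniq _ hu) /= andbC.
have hcrem : forall P : pred int, P y -> count P Y = (count P (rem y Y)).+1.
  by move=> P Py; rewrite (permP (perm_to_rem yY)) /= Py.
have hA0 : count (fun z => km b M z == km b M y) A = 0%N.
  have := hy M (leqnn M); rewrite hcrem ?eqxx //.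
  have -> : count (fun z => km b M z == km b M y) (rem y Y) = 0%N.
    rewrite (eq_in_count (a2 := pred0)) ?count_pred0 // => z /remP /andP[zY zy].
    by apply/negbTE/nd => //; rewrite mem_cat zY orbT.
  by rewrite ltnS leqn0 => /eqP.
have zA : forall z, z \in A -> y != z.
  move=> z zA; apply/eqP => yz.
  have : (0 < count (fun z => km b M z == km b M y) A)%N.
    by rewrite -has_count; apply/hasP; exists z => //; rewrite yz.
  by rewrite hA0.
rewrite /cost (big_Some (g := fun z => \sum_(m < M) ((km b m.+1 z == km b m.+1 y) : nat))%N); last first.
  by move=> z hz; apply: ordb_count => //; [apply: zA | apply: hM => //; rewrite mem_cat hz].
rewrite (big_Some (g := fun z => \sum_(m < M) ((km b m.+1 z == km b m.+1 y) : nat))%N); last first.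
  move=> z /remP /andP[zY zy]; apply: ordb_count => //; first by rewrite eq_sym.
  by apply: hM => //; rewrite mem_cat zY orbT.
rewrite /= (exchange_big) [X in (_ <= X)%N](exchange_big) /=.
apply: leq_sum => m _; rewrite !count_sum.
have := hy m.+1 (ltn_ord m); rewrite (hcrem (fun z => km b m.+1 z == km b m.+1 y)) ?eqxx // ltnS.
Qed.

Fixpoint W b (s : seq int) : enat :=
  if s is x :: s' then eadd (cost b x s') (W b s') else Some 0%N.

Fixpoint Ls (a : nat -> int) n : seq int :=
  if n is n'.+1 then a n' :: Ls a n' else [::].

Definition Psum b (a : nat -> int) n : enat := \big[eadd/Some 0%N]_(i < n.+1) alpha_b b a i.

Lemma ordb_sym b x y : ordb b (x - y) = ordb b (y - x).
Proof. by rewrite -opprB ordbN. Qed.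

Lemma W_cons b x s : W b (x :: s) = eadd (cost b x s) (W b s).
Proof. by []. Qed.

Lemma W_rem b y s : y \in s -> W b s = eadd (cost b y (rem y s)) (W b (rem y s)).
Proof.
elim: s => [|x s IH] //=; rewrite in_cons.
case: (eqVneq y x) => [->|yx] /= hy; first by [].
rewrite IH // /cost (perm_big _ (perm_to_rem hy)) /= big_cons big_cons.
rewrite ordb_sym.
rewrite !eaddA; congr eadd; rewrite -!eaddA; congr eadd; exact: eaddC.
Qed.

Lemma W_not_uniq b s : ~~ uniq s -> W b s = None.
Proof.
elim: s => [|x s IH] //=; rewrite negb_and negbK => /orP[hx|hu].
  by rewrite /cost (big_rem x hx) /= subrr ordb0.
by rewrite IH // eadd_None_r.
Qed.

Lemma cost_Ls b a n x : cost b x (Ls a n) = bsum b a n x.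
Proof.
elim: n => [|n IH]; first by rewrite /cost /bsum big_nil big_ord0.
by rewrite /cost /= big_cons -/(cost b x (Ls a n)) IH /bsum big_ord_recr /= eaddC.
Qed.

Lemma size_Ls a n : size (Ls a n) = n.
Proof. by elim: n => //= n ->. Qed.

Lemma mem_Ls (S : int -> Prop) a n z : (forall i, S (a i)) -> z \in Ls a n -> S z.
Proof.
move=> hS; elim: n => //= n IH; rewrite in_cons => /orP[/eqP ->|]; [exact: hS | exact: IH].
Qed.

Lemma W_Ls (b : nat) (a : nat -> int) (n : nat) : W b (Ls a n.+1) = Psum b a n.
Proof.
elim: n => [|n IH].
  by rewrite /Psum big_ord1 /= /alpha_b /bsum /cost big_ord0 big_nil.
rewrite /Psum big_ord_recr -/(Psum b a n) -IH.
change (Ls a n.+2) with (a n.+1 :: Ls a n.+1).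
by rewrite W_cons cost_Ls eaddC.
Qed.

Lemma Lmain b S a : (1 < b)%N -> b_ordering b S a -> forall n s,
  (forall z, z \in s -> S z) -> size s = n.+1 -> ele (Psum b a n) (W b s).
Proof.
move=> hb [haS hord]; elim=> [|n IH] s hs hsz.
  by rewrite /Psum big_ord1 /alpha_b /bsum big_ord0; case: (W b s).
case: (boolP (uniq s)) => hu; last by rewrite W_not_uniq // ele_None.
have hsz' : (size (Ls a n.+1) < size s)%N by rewrite size_Ls hsz.
have [y ys hy] := @KL b s (Ls a n.+1) hb hu hsz'.
rewrite (W_rem b ys) /Psum big_ord_recr /= -/(Psum b a n) eaddC.
apply: ele_add; last first.
  apply: IH; first by move=> z /mem_rem; apply: hs.
  by rewrite size_rem // hsz.
apply: ele_trans hy; rewrite cost_Ls; exact: hord _ _ (hs _ ys).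
Qed.

Lemma Psum_eq b S a a' n : (1 < b)%N -> b_ordering b S a -> b_ordering b S a' ->
  Psum b a n = Psum b a' n.
Proof.
move=> hb ha ha'; apply: ele_anti.
  rewrite -(W_Ls b a' n); apply: (Lmain hb ha); last by rewrite size_Ls.
  by move=> z; apply: mem_Ls; case: ha'.
rewrite -(W_Ls b a n); apply: (Lmain hb ha'); last by rewrite size_Ls.
by move=> z; apply: mem_Ls; case: ha.
Qed.

Lemma bsum_None b a i j x : bsum b a i x = None -> (i <= j)%N -> bsum b a j x = None.
Proof.
move=> hi; elim: j => [|j IH]; first by rewrite leqn0 => /eqP <-.
rewrite leq_eqVlt => /orP[/eqP <-|h] //.
by rewrite /bsum big_ord_recr /= -/(bsum b a j x) IH.
Qed.

Lemma alpha_None b S a i j : b_ordering b S a -> alpha_b b a i = None -> (i <= j)%N ->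
  alpha_b b a j = None.
Proof.
move=> [haS hord] hi hij.
case: i hi hij => [|i] hi hij; first by rewrite /alpha_b /bsum big_ord0 in hi.
have := hord i.+1 isT (a j) (haS j); rewrite /alpha_b in hi; rewrite hi.
case E: (bsum b a i.+1 (a j)) => [v|] // _.
exact: bsum_None E hij.
Qed.

Lemma alpha_eq b S a a' k : (1 < b)%N -> b_ordering b S a -> b_ordering b S a' ->
  alpha_b b a k = alpha_b b a' k.
Proof.
move=> hb ha ha'.
case: k => [|n]; first by rewrite /alpha_b /bsum !big_ord0.
have e := Psum_eq n.+1 hb ha ha'.
rewrite /Psum big_ord_recr /= -/(Psum b a n) [in RHS]big_ord_recr /= -/(Psum b a' n) in e.
rewrite (Psum_eq n hb ha ha') in e.
case E: (Psum b a' n) e => [p|] e.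
  move: e.
  case: (alpha_b b a n.+1) => [u|]; case: (alpha_b b a' n.+1) => [w|] //= [] h.
  by congr Some; lia.
have E' : Psum b a n = None by rewrite (Psum_eq n hb ha ha').
have [i hi ai] := big_None_ex E; have [i' hi' ai'] := big_None_ex E'.
rewrite (alpha_None ha ai') ?(alpha_None ha' ai) //; exact: ltnW.
Qed.

Lemma exists_min (P : int -> Prop) (c : int -> enat) :
  (exists y, P y) -> exists x, P x /\ forall y, P y -> ele (c x) (c y).
Proof.
move=> [y0 Py0].
case: (classic (exists y k, P y /\ c y = Some k)) => [[y [k [Py Hk]]]|Hn]; last first.
  exists y0; split => // y Py; case E: (c y) => [k|]; last exact: ele_None.
  by exfalso; apply: Hn; exists y, k.
have main : forall K k y, (k <= K)%N -> P y -> c y = Some k ->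
    exists x, P x /\ forall y, P y -> ele (c x) (c y).
  elim=> [|K IH] k' y' hk Py' Hk'.
  - exists y'; split => // z Pz; rewrite Hk'; case: (c z) => // j.
    by move: hk; rewrite leqn0 => /eqP ->.
  - case: (classic (forall z, P z -> ele (c y') (c z))) => [H|H]; first by exists y'.
    have [z Hz] := not_all_ex_not _ _ H.
    have [Pz nle] := imply_to_and _ _ Hz.
    move: nle; rewrite Hk'; case E: (c z) => [j|] //= hj.
    apply: (IH j z) => //; lia.
exact: (main k k y).
Qed.

Definition nextb b (S : int -> Prop) (L : seq int) : int :=
  epsilon (inhabits 0) (fun x => S x /\ forall y, S y -> ele (cost b x L) (cost b y L)).

Fixpoint Lb b S n : seq int := if n is n'.+1 then nextb b S (Lb b S n') :: Lb b S n' else [::].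

Definition ab b S n := nextb b S (Lb b S n).

Lemma Lb_Ls b S n : Lb b S n = Ls (ab b S) n.
Proof. by elim: n => //= n IH; rewrite -IH. Qed.

Lemma ab_ord b S : (exists s, S s) -> b_ordering b S (ab b S).
Proof.
move=> hS.
have H : forall n, S (ab b S n) /\ forall y, S y -> ele (cost b (ab b S n) (Lb b S n)) (cost b y (Lb b S n)).
  move=> n; rewrite /ab /nextb.
  apply: (epsilon_spec (inhabits 0) (fun x => S x /\ forall y, S y -> ele (cost b x (Lb b S n)) (cost b y (Lb b S n)))).
  exact: exists_min.
split; first by move=> i; case: (H i).
move=> i _ x Sx; have [_ Hi] := H i; have := Hi x Sx.
by rewrite Lb_Ls !cost_Ls.
Qed.

Lemma tsum_eq b (f : nat -> pseries) a i x : (1 < b)%N -> (forall j, f j = phi b (a j)) ->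
  tsum f i (phi b x) = bsum b a i x.
Proof.
move=> hb hf; apply: eq_bigr => j _; by rewrite hf ordt_phi.
Qed.

Local Close Scope ring_scope.

Theorem theorem5p3 (b : nat) (S : int -> Prop) :
  (2 <= b)%N -> (exists s, S s) ->
  (forall a a', b_ordering b S a -> b_ordering b S a' ->
     forall k, alpha_b b a k = alpha_b b a' k) /\
  (exists f, t_ordering (phi_image b S) f) /\
  (forall a f, b_ordering b S a -> t_ordering (phi_image b S) f ->
     forall k, (1 <= k)%N -> alpha_b b a k = alpha_t f k).
Proof.
move=> hb hS; split; [|split].
- by move=> a a' ha ha' k; apply: alpha_eq hb ha ha'.
- have [hab hord] := ab_ord b hS.
  exists (fun i => phi b (ab b S i)); split.
    by move=> i; exists (ab b S i); split.
  move=> i hi g [x [Sx ->]]; rewrite !(tsum_eq (a := ab b S)) //; exact: hord.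
- move=> a f ha [hfS hford] k hk.
  pose a' := fun i => epsilon (inhabits (0%R : int)) (fun s => S s /\ f i = phi b s).
  have ha'i : forall i, S (a' i) /\ f i = phi b (a' i).
    by move=> i; apply: (epsilon_spec (inhabits (0%R : int)) (fun s => S s /\ f i = phi b s)); case: (hfS i) => s [Ss ->]; exists s.
  have hfa : forall j, f j = phi b (a' j) by move=> j; case: (ha'i j).
  have ha' : b_ordering b S a'.
    split; first by move=> i; case: (ha'i i).
    move=> i hi x Sx.
    have := hford i hi (phi b x) (ex_intro _ x (conj Sx erefl)).
    by rewrite (hfa i) !(tsum_eq (a := a')).
  rewrite (alpha_eq k hb ha ha') /alpha_t /alpha_b (hfa k) (tsum_eq (a := a')) //.
Qed.
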